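(* Let $N\ge 2$, $x_0<x_1<\dots<x_N$, $h_i=x_i-x_{i-1}$, and let $f_1,\dots,f_N\in\mathbb{R}$ be a histogram. Let $I=[x_0,x_N]$, $I_i=[x_{i-1},x_i)$ for $i<N$, $I_N=[x_{N-1},x_N]$, and for $i=1,\dots,N$ let $L_i(x)=a_ix+b_i$ with $a_i=\frac{x_i-x_{i-1}}{x_N-x_0}$, $b_i=\frac{x_Nx_{i-1}-x_0x_i}{x_N-x_0}$, let $\alpha_i$ be arbitrary with $|\alpha_i|<1$, and let $q_i:I\to\mathbb{R}$ be Lipschitz continuous. Let $f$ be the unique bounded function on $I$ with $f(x)=\alpha_if(L_i^{-1}(x))+q_i(L_i^{-1}(x))$ for $x\in I_i$, $i=1,\dots,N$ (the fractal function of the IFS with maps $L_i(x)$, $F_i(x,y)=\alpha_iy+q_i(x)$). Then $\int_{x_{i-1}}^{x_i}f(x)\,dx=h_if_i$ for all $i=1,\dots,N$ if and only if $$\int_Iq_i(x)\,dx=\frac{h_if_i-\alpha_ia_i\sum_{j=1}^Nh_jf_j}{a_i},\qquad i=1,\dots,N.$$ *)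

(* Defs.v *)
From Stdlib Require Import Reals Lra.
From Coquelicot Require Import Coquelicot.
Open Scope R_scope.

(* Nodes x : nat -> R, indices 0..N; intervals/maps indexed 1..N. *)

Definition hstep (x : nat -> R) (i : nat) : R := x i - x (i - 1)%nat.

Definition acoef (x : nat -> R) (N i : nat) : R :=
  (x i - x (i - 1)%nat) / (x N - x 0%nat).
Definition bcoef (x : nat -> R) (N i : nat) : R :=
  (x N * x (i - 1)%nat - x 0%nat * x i) / (x N - x 0%nat).
Definition Lmap (x : nat -> R) (N i : nat) (t : R) : R :=
  acoef x N i * t + bcoef x N i.
Definition Linv (x : nat -> R) (N i : nat) (t : R) : R :=
  (t - bcoef x N i) / acoef x N i.

Definition in_Ii (x : nat -> R) (N i : nat) (t : R) : Prop :=
  x (i - 1)%nat <= t /\ (t < x i \/ (i = N /\ t <= x i)).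

Definition lipschitz_on (a b : R) (g : R -> R) : Prop :=
  exists K : R, forall s t, a <= s <= b -> a <= t <= b ->
    Rabs (g s - g t) <= K * Rabs (s - t).

Definition bounded_on (a b : R) (g : R -> R) : Prop :=
  exists M : R, forall t, a <= t <= b -> Rabs (g t) <= M.

Definition total_mass (x : nat -> R) (N : nat) (fh : nat -> R) : R :=
  sum_f_R0 (fun k => hstep x (S k) * fh (S k)) (N - 1)%nat.

(* Main.v *)
Require Import Defs.
From Stdlib Require Import Reals Lra Lia ClassicalEpsilon.
From Coquelicot Require Import Coquelicot.
Open Scope R_scope.

Lemma x_le (x : nat -> R) (N : nat) :
  (forall i, (i < N)%nat -> x i < x (S i)) ->
  forall k j, (j <= k <= N)%nat -> x j <= x k.
Proof.
  intros H k; induction k; intros j Hj.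
  - replace j with 0%nat by lia; lra.
  - destruct (Nat.eq_dec j (S k)). subst; lra.
    assert (x j <= x k) by (apply IHk; lia).
    specialize (H k ltac:(lia)). lra.
Qed.

Lemma x_lt (x : nat -> R) (N : nat) :
  (forall i, (i < N)%nat -> x i < x (S i)) ->
  forall k j, (j < k <= N)%nat -> x j < x k.
Proof.
  intros H k j Hj. destruct k. lia.
  assert (x j <= x k) by (apply (x_le x N H); lia).
  specialize (H k ltac:(lia)). lra.
Qed.

Lemma piece_int (F : R -> R) (u v c d p r l : R) :
  u <> 0 -> u*c+v = p -> u*d+v = r -> is_RInt F p r l ->
  is_RInt (fun t => F (u*t+v)) c d (/u * l).
Proof.
  intros Hu Hc Hd HI. subst.
  pose proof (is_RInt_comp_lin F u v c d l HI) as H3.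
  apply (is_RInt_scal _ _ _ (/u)) in H3.
  eapply is_RInt_ext; [|exact H3].
  intros t _. unfold scal; simpl; unfold mult; simpl. field. auto.
Qed.

Lemma clamp_lip (a b y z : R) :
  Rabs (Rmax a (Rmin b y) - Rmax a (Rmin b z)) <= Rabs (y - z).
Proof.
  unfold Rmax, Rmin; repeat destruct Rle_dec; unfold Rabs; repeat destruct Rcase_abs; lra.
Qed.

Lemma clamp_in (a b y : R) : a <= b -> a <= Rmax a (Rmin b y) <= b.
Proof. intros; unfold Rmax, Rmin; repeat destruct Rle_dec; lra. Qed.

Lemma lip_int (a b : R) (g : R -> R) :
  a <= b -> (exists K : R, forall s t, a <= s <= b -> a <= t <= b ->
    Rabs (g s - g t) <= K * Rabs (s - t)) -> ex_RInt g a b.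
Proof.
  intros Hab [K HK].
  set (g' := fun t => g (Rmax a (Rmin b t))).
  assert (Hc : forall z, continuous g' z).
  { intro z. apply continuity_pt_filterlim.
    intros eps Heps. exists (eps / (Rabs K + 1)). split.
    apply Rdiv_lt_0_compat; [lra| pose proof (Rabs_pos K); lra].
    intros y [_ Hy]. simpl in *. unfold R_dist in *. unfold g'.
    pose proof (HK _ _ (clamp_in a b y Hab) (clamp_in a b z Hab)) as H1.
    pose proof (clamp_lip a b y z) as H2.
    pose proof (Rabs_pos K). pose proof (Rle_abs K).
    pose proof (Rabs_pos (Rmax a (Rmin b y) - Rmax a (Rmin b z))).
    assert (Rabs (y - z) * (Rabs K + 1) < eps).
    { apply (Rmult_lt_compat_r (Rabs K + 1)) in Hy; [|lra].
      assert (H5 : eps / (Rabs K +1) * (Rabs K + 1) = eps) by (field; lra). rewrite H5 in Hy. exact Hy. }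
    assert (K * Rabs (Rmax a (Rmin b y) - Rmax a (Rmin b z)) <= Rabs K * Rabs (y - z)).
    { apply Rle_trans with (Rabs K * Rabs (Rmax a (Rmin b y) - Rmax a (Rmin b z))).
      apply Rmult_le_compat_r; lra. apply Rmult_le_compat_l; lra. }
    pose proof (Rabs_pos (y - z)).
    assert (Rabs K * Rabs (y - z) <= Rabs (y - z) * (Rabs K + 1)) by nra.
    lra. }
  apply (ex_RInt_ext g').
  - intros t Ht. unfold g'. rewrite Rmin_left, Rmax_right in Ht by lra.
    f_equal. unfold Rmax, Rmin; repeat destruct Rle_dec; lra.
  - apply (@ex_RInt_continuous R_CompleteNormedModule). intros; apply Hc.
Qed.

Lemma a_pos x N i : (forall i, (i < N)%nat -> x i < x (S i)) ->
  (1 <= i <= N)%nat -> 0 < acoef x N i /\ x 0%nat < x N.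
Proof.
  intros H Hi. assert (x 0%nat < x N) by (apply (x_lt x N H); lia).
  assert (x (i-1)%nat < x i) by (apply (x_lt x N H); lia).
  split; auto. unfold acoef. apply Rdiv_lt_0_compat; lra.
Qed.

Lemma piece_RInt x N i (F : R -> R) l : (forall i, (i < N)%nat -> x i < x (S i)) ->
  (1 <= i <= N)%nat -> is_RInt F (x 0%nat) (x N) l ->
  is_RInt (fun t => F (Linv x N i t)) (x (i-1)%nat) (x i) (acoef x N i * l).
Proof.
  intros H Hi HF. destruct (a_pos x N i H Hi) as [Ha HN].
  assert (x (i-1)%nat < x i) by (apply (x_lt x N H); lia).
  replace (acoef x N i * l) with (/ (/ acoef x N i) * l)
    by (rewrite Rinv_inv; auto).
  apply (is_RInt_ext (fun t => F (/ acoef x N i * t + (- bcoef x N i / acoef x N i)))).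
  { intros t _. f_equal. unfold Linv. field. lra. }
  apply (piece_int F _ _ _ _ (x 0%nat) (x N)).
  - apply Rinv_neq_0_compat; lra.
  - unfold acoef, bcoef. field. lra.
  - unfold acoef, bcoef. field. lra.
  - auto.
Qed.

Definition idx (x : nat -> R) (N : nat) (t : R) : nat :=
  epsilon (inhabits 0%nat) (fun k => (1 <= k <= N)%nat /\ in_Ii x N k t).

Definition Tstep (x : nat -> R) (N : nat) (alpha : nat -> R) (q : nat -> R -> R)
  (f g : R -> R) (t : R) : R :=
  if excluded_middle_informative ((1 <= idx x N t <= N)%nat /\ in_Ii x N (idx x N t) t)
  then alpha (idx x N t) * g (Linv x N (idx x N t) t) + q (idx x N t) (Linv x N (idx x N t) t)
  else f t.

Lemma uniq_idx x N i t : (forall i, (i < N)%nat -> x i < x (S i)) ->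
  (1 <= i <= N)%nat -> x (i-1)%nat < t < x i ->
  forall j, (1 <= j <= N)%nat /\ in_Ii x N j t -> j = i.
Proof.
  intros H Hi Ht j [Hj [H1 H2]].
  destruct (Compare_dec.lt_eq_lt_dec j i) as [[Hlt|Heq]|Hgt]; auto.
  - assert (x j <= x (i-1)%nat) by (apply (x_le x N H); lia).
    destruct H2 as [H2|[H2 _]]; [lra|lia].
  - assert (x i <= x (j-1)%nat) by (apply (x_le x N H); lia). lra.
Qed.

Lemma Tstep_piece x N alpha q f g i t : (forall i, (i < N)%nat -> x i < x (S i)) ->
  (1 <= i <= N)%nat -> x (i-1)%nat < t < x i ->
  Tstep x N alpha q f g t = alpha i * g (Linv x N i t) + q i (Linv x N i t).
Proof.
  intros H Hi Ht.
  assert (Hp : (1 <= i <= N)%nat /\ in_Ii x N i t).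
  { split; auto. split; [lra| left; lra]. }
  assert (Hs := epsilon_spec (inhabits 0%nat) (fun k => (1 <= k <= N)%nat /\ in_Ii x N k t) (ex_intro _ i Hp)).
  fold (idx x N t) in Hs.
  assert (E : idx x N t = i) by (apply (uniq_idx x N i t H Hi Ht); auto).
  unfold Tstep. destruct excluded_middle_informative as [_|C]; [|tauto].
  rewrite E. reflexivity.
Qed.

Lemma chain_ex x N (h : R -> R) : (forall i, (i < N)%nat -> x i < x (S i)) -> (1 <= N)%nat ->
  (forall i, (1 <= i <= N)%nat -> ex_RInt h (x (i-1)%nat) (x i)) -> ex_RInt h (x 0%nat) (x N).
Proof.
  intros H HN Hp.
  assert (forall m, (1 <= m <= N)%nat -> ex_RInt h (x 0%nat) (x m)).
  { intro m; induction m; intros Hm. lia.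
    destruct m. apply (Hp 1%nat); lia.
    apply (ex_RInt_Chasles _ _ (x (S m))). apply IHm; lia.
    replace (S m) with (S (S m) - 1)%nat at 1 by lia. apply Hp; lia. }
  apply H0; lia.
Qed.

Lemma chain_sum x N (h : R -> R) : (forall i, (i < N)%nat -> x i < x (S i)) -> (1 <= N)%nat ->
  ex_RInt h (x 0%nat) (x N) ->
  RInt h (x 0%nat) (x N) = sum_f_R0 (fun k => RInt h (x k) (x (S k))) (N-1).
Proof.
  intros H HN Hex.
  assert (forall m, (m < N)%nat -> RInt h (x 0%nat) (x (S m)) = sum_f_R0 (fun k => RInt h (x k) (x (S k))) m).
  { intro m; induction m; intros Hm. reflexivity.
    simpl. rewrite <- IHm by lia.
    assert (x 0%nat <= x (S m)) by (apply (x_le x N H); lia).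
    assert (x (S m) <= x (S (S m))) by (apply (x_le x N H); lia).
    assert (x (S (S m)) <= x N) by (apply (x_le x N H); lia).
    assert (E1 : ex_RInt h (x 0%nat) (x (S (S m)))) by (apply (@ex_RInt_Chasles_1 R_CompleteNormedModule _ _ _ (x N)); auto; lra).
    rewrite <- (@RInt_Chasles R_CompleteNormedModule h _ (x (S m))). reflexivity.
    apply (@ex_RInt_Chasles_1 R_CompleteNormedModule _ _ _ (x (S (S m)))); auto; lra.
    apply (@ex_RInt_Chasles_2 R_CompleteNormedModule _ (x 0%nat)); auto; lra. }
  replace N with (S (N-1)) at 1 by lia. apply H0; lia.
Qed.

Lemma cmax (alpha : nat -> R) : forall N,
  (forall i, (1 <= i <= N)%nat -> Rabs (alpha i) < 1) ->
  exists c, 0 <= c < 1 /\ forall i, (1 <= i <= N)%nat -> Rabs (alpha i) <= c.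
Proof.
  induction N; intros H.
  - exists 0; split; [lra|]. intros; lia.
  - destruct IHN as [c [Hc Hc2]]. intros; apply H; lia.
    exists (Rmax c (Rabs (alpha (S N)))). split.
    + split. apply Rle_trans with c; [lra| apply Rmax_l].
      apply Rmax_lub_lt; [lra| apply H; lia].
    + intros i Hi. destruct (Nat.eq_dec i (S N)). subst; apply Rmax_r.
      apply Rle_trans with c; [apply Hc2; lia| apply Rmax_l].
Qed.

Fixpoint Gs (x : nat -> R) (N : nat) (alpha : nat -> R) (q : nat -> R -> R)
  (f : R -> R) (n : nat) : R -> R :=
  match n with
  | O => fun t => if excluded_middle_informative (x 0%nat <= t <= x N) then 0 else f t
  | S n => Tstep x N alpha q f (Gs x N alpha q f n)
  end.

Lemma f_int (N : nat) (x : nat -> R) (alpha : nat -> R)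
  (q : nat -> R -> R) (f : R -> R) :
  (2 <= N)%nat ->
  (forall i, (i < N)%nat -> x i < x (S i)) ->
  (forall i, (1 <= i <= N)%nat -> Rabs (alpha i) < 1) ->
  (forall i, (1 <= i <= N)%nat -> lipschitz_on (x 0%nat) (x N) (q i)) ->
  bounded_on (x 0%nat) (x N) f ->
  (forall i t, (1 <= i <= N)%nat -> in_Ii x N i t ->
     f t = alpha i * f (Linv x N i t) + q i (Linv x N i t)) ->
  ex_RInt f (x 0%nat) (x N).
Proof.
  intros HN Hinc Hal Hq [M HM] Hf.
  destruct (cmax alpha N Hal) as [c [Hc Hc2]].
  assert (H0N : x 0%nat < x N) by (apply (x_lt x N Hinc); lia).
  assert (Hqi : forall i, (1 <= i <= N)%nat -> ex_RInt (q i) (x 0%nat) (x N)).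
  { intros i Hi. apply lip_int. lra. apply Hq; auto. }
  assert (Hstep : forall g, ex_RInt g (x 0%nat) (x N) -> ex_RInt (Tstep x N alpha q f g) (x 0%nat) (x N)).
  { intros g Hg. apply (chain_ex x N _ Hinc); [lia|]. intros i Hi.
    assert (HF : ex_RInt (fun s => alpha i * g s + q i s) (x 0%nat) (x N)).
    { apply (@ex_RInt_plus R_NormedModule (fun s => alpha i * g s)); [|apply Hqi; auto].
      apply (@ex_RInt_scal R_NormedModule g). auto. }
    destruct HF as [l Hl].
    assert (Hp := piece_RInt x N i _ l Hinc Hi Hl).
    assert (x (i-1)%nat < x i) by (apply (x_lt x N Hinc); lia).
    apply (ex_RInt_ext (fun t => alpha i * g (Linv x N i t) + q i (Linv x N i t))).
    - intros t Ht. rewrite Rmin_left, Rmax_right in Ht by lra.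
      symmetry. apply Tstep_piece; auto.
    - eexists; exact Hp. }
  assert (Hbnd : forall g B, (forall t, Rabs (g t - f t) <= B) ->
     forall t, Rabs (Tstep x N alpha q f g t - f t) <= c * B).
  { intros g B HB t. assert (0 <= B) by (specialize (HB 0); pose proof (Rabs_pos (g 0 - f 0)); lra).
    unfold Tstep. destruct excluded_middle_informative as [Hp|Hp].
    - rewrite (Hf (idx x N t) t) by tauto.
      replace (alpha (idx x N t) * g (Linv x N (idx x N t) t) + q (idx x N t) (Linv x N (idx x N t) t) -
        (alpha (idx x N t) * f (Linv x N (idx x N t) t) + q (idx x N t) (Linv x N (idx x N t) t)))
        with (alpha (idx x N t) * (g (Linv x N (idx x N t) t) - f (Linv x N (idx x N t) t))) by ring.
      rewrite Rabs_mult. apply Rmult_le_compat; try apply Rabs_pos. apply Hc2; tauto. apply HB.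
    - replace (f t - f t) with 0 by ring. rewrite Rabs_R0. nra. }
  set (M' := Rabs M).
  assert (Hinv : forall n, ex_RInt (Gs x N alpha q f n) (x 0%nat) (x N) /\
                 forall t, Rabs (Gs x N alpha q f n t - f t) <= c ^ n * M').
  { induction n.
    - split.
      + apply (ex_RInt_ext (fun _ => 0)).
        * intros t Ht. rewrite Rmin_left, Rmax_right in Ht by lra. simpl.
          destruct excluded_middle_informative; [reflexivity| exfalso; apply n; lra].
        * apply ex_RInt_const.
      + intros t. simpl. destruct excluded_middle_informative as [Ht|Ht].
        * specialize (HM t Ht). unfold M'. rewrite Rminus_0_l, Rabs_Ropp.
          pose proof (Rle_abs M). lra.
        * replace (f t - f t) with 0 by ring. rewrite Rabs_R0. unfold M'. pose proof (Rabs_pos M). lra.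
    - destruct IHn as [IH1 IH2]. split.
      + simpl. apply Hstep; auto.
      + intros t. simpl. replace (c * c ^ n * M') with (c * (c ^ n * M')) by ring. apply Hbnd; auto. }
  assert (Hlim : filterlim (Gs x N alpha q f) eventually (locally (T := fct_UniformSpace R R_UniformSpace) f)).
  { intros P [eps Heps].
    assert (He : 0 < eps / (M' + 1)).
    { apply Rdiv_lt_0_compat. apply cond_pos. unfold M'; pose proof (Rabs_pos M); lra. }
    assert (Hca : Rabs c < 1) by (rewrite Rabs_right; lra).
    destruct (pow_lt_1_zero c Hca _ He) as [n0 Hn0].
    exists n0. intros n Hn. apply Heps. intro t.
    unfold ball; simpl. unfold AbsRing_ball, abs, minus, plus, opp; simpl.
    destruct (Hinv n) as [_ H2]. specialize (H2 t). specialize (Hn0 n Hn).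
    rewrite Rabs_right in Hn0 by (apply Rle_ge, pow_le; lra).
    assert (0 <= M') by (unfold M'; apply Rabs_pos).
    assert (c ^ n * M' < eps).
    { assert (c ^ n * (M' + 1) < eps).
      { apply (Rmult_lt_compat_r (M' + 1)) in Hn0; [|lra].
        replace (eps / (M' + 1) * (M' + 1)) with (pos eps) in Hn0 by (field; lra). exact Hn0. }
      pose proof (pow_le c n ltac:(lra)). nra. }
    replace (Gs x N alpha q f n t + - f t) with (Gs x N alpha q f n t - f t) by ring. lra. }
  destruct (filterlim_RInt (V := R_CompleteNormedModule) (Gs x N alpha q f) (x 0%nat) (x N) eventually eventually_filter
              f (fun n => RInt (Gs x N alpha q f n) (x 0%nat) (x N))) as [If [_ HIf]].
  - intros n. apply RInt_correct. apply (Hinv n).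
  - exact Hlim.
  - eexists; exact HIf.
Qed.

Lemma telesc (x : nat -> R) : forall m, sum_f_R0 (fun k => x (S k) - x k) m = x (S m) - x 0%nat.
Proof. induction m; simpl; [ring| rewrite IHm; ring]. Qed.

Lemma sum_pos (F : nat -> R) : forall m, (forall k, (k <= m)%nat -> 0 < F k) -> 0 < sum_f_R0 F m.
Proof.
  induction m; intros H; simpl. apply H; lia.
  assert (0 < sum_f_R0 F m) by (apply IHm; intros; apply H; lia).
  assert (0 < F (S m)) by (apply H; lia). lra.
Qed.

Theorem mainTheorem8
  (N : nat) (x : nat -> R) (fh : nat -> R) (alpha : nat -> R)
  (q : nat -> R -> R) (f : R -> R) :
  (2 <= N)%nat ->
  (forall i, (i < N)%nat -> x i < x (S i)) ->
  (forall i, (1 <= i <= N)%nat -> Rabs (alpha i) < 1) ->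
  (forall i, (1 <= i <= N)%nat -> lipschitz_on (x 0%nat) (x N) (q i)) ->
  bounded_on (x 0%nat) (x N) f ->
  (forall i t, (1 <= i <= N)%nat -> in_Ii x N i t ->
     f t = alpha i * f (Linv x N i t) + q i (Linv x N i t)) ->
  ((forall i, (1 <= i <= N)%nat ->
      RInt f (x (i - 1)%nat) (x i) = hstep x i * fh i)
   <->
   (forall i, (1 <= i <= N)%nat ->
      RInt (q i) (x 0%nat) (x N)
      = (hstep x i * fh i - alpha i * acoef x N i * total_mass x N fh)
          / acoef x N i)).
Proof.
  intros HN Hinc Hal Hq Hbd Hf.
  assert (Hex := f_int N x alpha q f HN Hinc Hal Hq Hbd Hf).
  assert (H0N : x 0%nat < x N) by (apply (x_lt x N Hinc); lia).
  assert (Hqi : forall i, (1 <= i <= N)%nat -> ex_RInt (q i) (x 0%nat) (x N)).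
  { intros i Hi. apply lip_int. lra. apply Hq; auto. }
  remember (RInt f (x 0%nat) (x N) : R) as S0 eqn:HS0.
  assert (H1 : forall i, (1 <= i <= N)%nat -> RInt f (x (i-1)%nat) (x i) =
      acoef x N i * (alpha i * S0 + RInt (q i) (x 0%nat) (x N))).
  { intros i Hi.
    assert (HF : is_RInt (fun s => alpha i * f s + q i s) (x 0%nat) (x N)
                   (alpha i * S0 + RInt (q i) (x 0%nat) (x N))).
    { apply (@is_RInt_plus R_NormedModule (fun s => alpha i * f s)).
      apply (@is_RInt_scal R_NormedModule f). rewrite HS0. apply (@RInt_correct R_CompleteNormedModule); auto.
      apply (@RInt_correct R_CompleteNormedModule); auto. }
    assert (Hp := piece_RInt x N i _ _ Hinc Hi HF).
    apply (@is_RInt_unique R_CompleteNormedModule) in Hp. rewrite <- Hp.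
    assert (x (i-1)%nat < x i) by (apply (x_lt x N Hinc); lia).
    apply RInt_ext. intros t Ht. rewrite Rmin_left, Rmax_right in Ht by lra.
    apply Hf; auto. split; [lra| left; lra]. }
  assert (H2 := chain_sum x N f Hinc ltac:(lia) Hex). rewrite <- HS0 in H2.
  assert (Hapos : forall i, (1 <= i <= N)%nat -> 0 < acoef x N i)
    by (intros i Hi; apply (a_pos x N i Hinc Hi)).
  assert (H3 : sum_f_R0 (fun k => acoef x N (S k)) (N-1) = 1).
  { unfold acoef.
    rewrite (sum_eq _ (fun k => (x (S k) - x k) * / (x N - x 0%nat))).
    rewrite <- scal_sum, telesc. replace (S (N-1)) with N by lia. field. lra.
    intros k Hk. replace (S k - 1)%nat with k by lia. reflexivity. }
  assert (H4 : 0 < sum_f_R0 (fun k => acoef x N (S k) - alpha (S k) * acoef x N (S k)) (N-1)).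
  { apply sum_pos. intros k Hk.
    assert (0 < acoef x N (S k)) by (apply Hapos; lia).
    assert (Rabs (alpha (S k)) < 1) by (apply Hal; lia).
    pose proof (Rle_abs (alpha (S k))). nra. }
  rewrite minus_sum, H3 in H4.
  split.
  - intros HA i Hi.
    assert (ST : S0 = total_mass x N fh).
    { rewrite H2. unfold total_mass. apply sum_eq. intros k Hk.
      rewrite <- HA by lia. replace (S k - 1)%nat with k by lia. reflexivity. }
    rewrite <- (HA i Hi), H1, ST by auto.
    assert (0 < acoef x N i) by auto.
    match goal with |- ?a = ?b => change (@eq R a b) end.
    destruct (ex_intro (fun Q : R => RInt (q i) (x 0%nat) (x N) = Q) _ eq_refl) as [Q HQv].
    rewrite HQv. field. lra.
  - intros HQ.
    set (T := total_mass x N fh) in *.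
    assert (HA : forall i, (1 <= i <= N)%nat -> RInt f (x (i-1)%nat) (x i) =
        hstep x i * fh i + alpha i * acoef x N i * (S0 - T)).
    { intros i Hi. rewrite H1, HQ by auto. assert (0 < acoef x N i) by auto.
      match goal with |- ?a = ?b => change (@eq R a b) end. field. lra. }
    assert (ST : S0 = T).
    { assert (E : S0 = T + (S0 - T) * sum_f_R0 (fun k => alpha (S k) * acoef x N (S k)) (N-1)).
      { rewrite H2 at 1.
        rewrite (sum_eq _ (fun k => hstep x (S k) * fh (S k) + alpha (S k) * acoef x N (S k) * (S0 - T))).
        rewrite sum_plus, scal_sum. reflexivity.
        intros k Hk. replace k with (S k - 1)%nat at 1 by lia. apply HA; lia. }
      assert ((S0 - T) * (1 - sum_f_R0 (fun k => alpha (S k) * acoef x N (S k)) (N-1)) = 0) by lra.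
      apply Rmult_integral in H. destruct H; lra. }
    intros i Hi. rewrite HA by auto. rewrite ST.
    match goal with |- ?a = ?b => change (@eq R a b) end. ring.
Qed.
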